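(* Let $R$ be a ring and $A$ a subinjective extension-reflecting right $R$-module. Then $A\in \underline{\mathfrak{In}}^{-1}(N)$ for every cyclic right $R$-module $N$ if and only if $A\in \underline{\mathfrak{In}}^{-1}(N)$ for every finitely generated right $R$-module $N$.
   Context: Modules are unital right $R$-modules. For modules $X,Y$, $X\in \underline{\mathfrak{In}}^{-1}(Y)$ means: for every module $C$ containing $X$ as a submodule, every homomorphism $X\to Y$ extends to a homomorphism $C\to Y$. A module $M$ is subinjective extension-reflecting if for every short exact sequence $0\to A'\to B\to C\to 0$ of right $R$-modules, $M\in \underline{\mathfrak{In}}^{-1}(A')\cap \underline{\mathfrak{In}}^{-1}(C)$ implies $M\in \underline{\mathfrak{In}}^{-1}(B)$. *)

(* Defs.v *)
From mathcomp Require Import all_boot all_algebra.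
Set Implicit Arguments. Unset Strict Implicit. Unset Printing Implicit Defensive.
Import GRing.Theory.
Local Open Scope ring_scope.

(* Right R-modules are modelled as left modules over the converse ring R^c:
   for r : R and m : M, the right action m * r is  r *: m  in M : lmodType R^c. *)
Notation rmodType R := (lmodType (R^c)).

(* X \in In^{-1}(Y): for every module C containing X as a submodule (i.e. every
   injective homomorphism i : X -> C), every homomorphism f : X -> Y extends
   along i to a homomorphism g : C -> Y. *)
Definition subinj (R : pzRingType) (X Y : rmodType R) : Prop :=
  forall (C : rmodType R) (i : {linear X -> C}), injective i ->
  forall f : {linear X -> Y},
  exists g : {linear C -> Y}, forall x : X, g (i x) = f x.

Definition short_exact (R : pzRingType) (A' B C : rmodType R)
  (f : {linear A' -> B}) (g : {linear B -> C}) : Prop :=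
  [/\ injective f, (forall c : C, exists b : B, g b = c) &
      (forall b : B, g b = 0 <-> exists a : A', f a = b)].

Definition subinj_ext_reflecting (R : pzRingType) (M : rmodType R) : Prop :=
  forall (A' B C : rmodType R) (f : {linear A' -> B}) (g : {linear B -> C}),
  short_exact f g -> subinj M A' -> subinj M C -> subinj M B.

Definition cyclic_mod (R : pzRingType) (N : rmodType R) : Prop :=
  exists n : N, forall x : N, exists r : R, x = (r : R^c) *: n.

Definition fingen_mod (R : pzRingType) (N : rmodType R) : Prop :=
  exists s : seq N, forall x : N, exists r : 'I_(size s) -> R,
    x = \sum_(i < size s) (r i : R^c) *: s`_i.

(* Main.v *)
Set Warnings "-notation-overridden,-ambiguous-paths,-redundant-canonical-projection,-projection-no-head-constant".
Require Import Defs.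
From HB Require Import structures.
From mathcomp Require Import all_boot all_algebra.
From mathcomp Require Import boolp.
Set Implicit Arguments. Unset Strict Implicit. Unset Printing Implicit Defensive.
Import GRing.Theory.
Local Open Scope ring_scope.

Record subm (K : pzRingType) (V : lmodType K) := Subm {
  sp : V -> Prop; s0 : sp 0; sB : forall x y, sp x -> sp y -> sp (x - y);
  sZ : forall a x, sp x -> sp (a *: x) }.

Section Quot.
Variables (K : pzRingType) (V : lmodType K) (P : subm V).
Let Sp := sp P.
Let S0 : Sp 0 := s0 P.
Let SB : forall x y, Sp x -> Sp y -> Sp (x - y) := @sB _ _ P.
Let SZ : forall a x, Sp x -> Sp (a *: x) := @sZ _ _ P.

Definition Sb : pred V := fun x => `[< Sp x >].
Lemma SbP x : reflect (Sp x) (x \in Sb).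
Proof. exact: asboolP. Qed.

Lemma SD x y : Sp x -> Sp y -> Sp (x + y).
Proof. move=> hx hy; rewrite -[y]opprK; apply: SB => //; rewrite -sub0r; exact: SB. Qed.
Lemma SN x : Sp x -> Sp (- x).
Proof. by move=> hx; rewrite -sub0r; apply: SB. Qed.

Record Sub := MkSub { subval : V; sP : subval \in Sb }.
HB.instance Definition _ := [isSub for subval].
HB.instance Definition _ := [Choice of Sub by <:].
Lemma Sb_closed : subsemimod_closed Sb.
Proof.
split; [split; [by apply/SbP|] | ].
  by move=> x y /SbP hx /SbP hy; apply/SbP; apply: SD.
by move=> a x /SbP hx; apply/SbP; apply: SZ.
Qed.
HB.instance Definition _ := GRing.SubChoice_isSubLmodule.Build K V Sb Sub Sb_closed.

Lemma sval_lin : linear_for *:%R (subval : Sub -> V).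
Proof. by move=> a u v; rewrite -[subval _]/(val _) raddfD; congr (_ + _); exact: valZ. Qed.

HB.instance Definition _ := GRing.isLinear.Build K Sub V *:%R subval sval_lin.
Lemma ex_rep x : exists y, (fun y => (y - x) \in Sb) y.
Proof. by exists x; apply/SbP; rewrite subrr. Qed.
Definition rep x := xchoose (ex_rep x).
Lemma repP x : Sp (rep x - x).
Proof. exact/SbP/(xchooseP (ex_rep x)). Qed.
Lemma rep_eq x y : Sp (x - y) -> rep x = rep y.
Proof.
move=> h; apply: eq_xchoose => z; apply/SbP/SbP => hz.
  by have := SD hz h; rewrite addrA subrK.
by have := SB hz h; rewrite opprB addrA subrK.
Qed.
Lemma rep_idem x : rep (rep x) = rep x.
Proof. exact/rep_eq/repP. Qed.

Record Quo := MkQ { qval : V; qP : rep qval == qval }.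
HB.instance Definition _ := [isSub for qval].
HB.instance Definition _ := [Choice of Quo by <:].
Definition proj x := MkQ (introT eqP (rep_idem x)).
Lemma projE (a : Quo) : proj (qval a) = a.
Proof. by apply: val_inj => /=; apply/eqP/qP. Qed.
Lemma proj_eq x y : (proj x = proj y) <-> Sp (x - y).
Proof.
split.
  move=> /(congr1 qval) /= e.
  have := SB (repP y) (repP x); rewrite e.
  by rewrite opprB addrC addrA subrK.
by move=> h; apply: val_inj => /=; apply: rep_eq.
Qed.
Lemma proj_qval x : Sp (qval (proj x) - x).
Proof. exact: repP. Qed.

Definition qadd a b := proj (qval a + qval b).
Definition qopp a := proj (- qval a).
Definition qzero := proj 0.
Definition qscale (k : K) a := proj (k *: qval a).

Lemma qaddE x y : qadd (proj x) (proj y) = proj (x + y).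
Proof.
apply/proj_eq; have := SD (proj_qval x) (proj_qval y).
by rewrite addrACA opprD.
Qed.
Lemma qoppE x : qopp (proj x) = proj (- x).
Proof. by apply/proj_eq; have := SN (proj_qval x); rewrite opprB opprK addrC. Qed.
Lemma qscaleE k x : qscale k (proj x) = proj (k *: x).
Proof. by apply/proj_eq; have := SZ k (proj_qval x); rewrite scalerBr. Qed.

Lemma qelim (Q : Quo -> Prop) : (forall x, Q (proj x)) -> forall a, Q a.
Proof. by move=> h a; rewrite -(projE a). Qed.

Lemma qaddA : associative qadd.
Proof.
by elim/qelim=> x; elim/qelim=> y; elim/qelim=> z; rewrite !qaddE addrA.
Qed.
Lemma qaddC : commutative qadd.
Proof. by elim/qelim=> x; elim/qelim=> y; rewrite !qaddE addrC. Qed.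
Lemma qadd0 : left_id qzero qadd.
Proof. by elim/qelim=> x; rewrite qaddE add0r. Qed.
Lemma qaddN : left_inverse qzero qopp qadd.
Proof. by elim/qelim=> x; rewrite qoppE qaddE addNr. Qed.
HB.instance Definition _ := GRing.isZmodule.Build Quo qaddA qaddC qadd0 qaddN.

Lemma qsA a b v : qscale a (qscale b v) = qscale (a * b) v.
Proof. by elim/qelim: v => x; rewrite !qscaleE scalerA. Qed.
Lemma qs1 : left_id 1 qscale.
Proof. by elim/qelim=> x; rewrite qscaleE scale1r. Qed.
Lemma qsDr : right_distributive qscale +%R.
Proof.
move=> k; elim/qelim=> x; elim/qelim=> y; change (qscale k (qadd (proj x) (proj y)) = qadd (qscale k (proj x)) (qscale k (proj y))). by rewrite qaddE !qscaleE qaddE scalerDr.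
Qed.
Lemma qsDl v : {morph qscale^~ v: a b / a + b}.
Proof.
by elim/qelim: v => x a b; change (qscale (a + b) (proj x) = qadd (qscale a (proj x)) (qscale b (proj x))); rewrite !qscaleE ?qaddE scalerDl.
Qed.
HB.instance Definition _ := GRing.Zmodule_isLmodule.Build K Quo qsA qs1 qsDr qsDl.

Lemma proj_lin : linear_for *:%R proj.
Proof. by move=> a u v; change (proj (a *: u + v) = qadd (qscale a (proj u)) (proj v)); rewrite qscaleE qaddE. Qed.
HB.instance Definition _ := GRing.isLinear.Build K V Quo *:%R proj proj_lin.

Lemma proj0 x : proj x = 0 <-> Sp x.
Proof. have := proj_eq x 0; rewrite subr0; exact. Qed.

End Quot.

Lemma fingen_nat (R : pzRingType) (N : rmodType R) (s : seq N) :
  (forall x : N, exists rn : nat -> R, x = \sum_(i < size s) (rn i : R^c) *: s`_i) ->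
  forall x : N, exists r : 'I_(size s) -> R, x = \sum_(i < size s) (r i : R^c) *: s`_i.
Proof. by move=> h x; have [rn ->] := h x; exists (fun i => rn i). Qed.

Theorem mainTheorem5 (R : pzRingType) (A : rmodType R) :
  subinj_ext_reflecting A ->
  ((forall N : rmodType R, cyclic_mod N -> subinj A N) <->
   (forall N : rmodType R, fingen_mod N -> subinj A N)).
Proof.
move=> HA; split; last first.
  move=> Hf N [n hn]; apply: Hf; exists [:: n] => x.
  have [r ->] := hn x; exists (fun _ => r); by rewrite big_ord1.
move=> Hc N [s Hs].
suff: forall k (N : rmodType R) (s : seq N), size s = k ->
  (forall x : N, exists r : 'I_(size s) -> R, x = \sum_(i < size s) (r i : R^c) *: s`_i) ->
  subinj A N by move/(_ _ N s erefl Hs).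
clear N s Hs; elim=> [|k IH] N [|n s] //=.
  move=> _ Hs.
  apply: Hc; exists 0 => x; have [r ->] := Hs x; rewrite big_ord0.
  by exists 0; rewrite scaler0.
case=> sz Hs.
pose Sp := fun x : N => exists r : R, x = (r : R^c) *: n.
have S0 : Sp 0 by exists 0; rewrite scale0r.
have SB : forall x y, Sp x -> Sp y -> Sp (x - y).
  by move=> x y [a ->] [b ->]; exists (a - b); rewrite scalerBl.
have SZ : forall (a : R^c) x, Sp x -> Sp (a *: x).
  by move=> a x [b ->]; exists (a * b : R^c); rewrite scalerA.
pose PP := Subm S0 SB SZ.
have nS : n \in Sb PP by apply/SbP; exists 1; rewrite scale1r.
pose f : {linear Sub PP -> N} := GRing.Linear.clone _ _ _ _ (@subval _ _ PP) _.
pose g : {linear N -> Quo PP} := GRing.Linear.clone _ _ _ _ (@proj _ _ PP) _.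
apply: (HA (Sub PP) N (Quo PP) f g).
- split.
  + exact: val_inj.
  + by move=> c; exists (qval c); apply: projE.
  + move=> b; rewrite proj0; split.
      by move=> hb; exists (MkSub (introT (SbP _ _) hb)).
    by move=> [a <-]; apply/SbP/(sP a).
- apply: Hc; exists (MkSub nS) => x.
  have /SbP [r hr] := sP x; exists r; apply: val_inj.
  by rewrite -[LHS]/(subval x) hr -[RHS]/(f ((r : R^c) *: MkSub nS)) linearZ.
- apply: (IH _ (map (@proj _ _ PP) s)); first by rewrite size_map.
  apply: fingen_nat; elim/qelim => y.
  have [r ->] := Hs y.
  exists (fun k => r (inord k.+1)).
  rewrite big_ord_recl /= linearD /= linearZ /=.
  have -> : @proj _ _ PP n = 0 by apply/proj0/SbP.
  rewrite scaler0 add0r linear_sum /=.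
  have e := size_map (@proj _ _ PP) s.
  rewrite e; apply: eq_bigr => i _; rewrite linearZ /= (nth_map 0) //.
  congr (_ *: _); congr (r _); apply: val_inj; rewrite /= inordK //.
  by rewrite ltnS.
Qed.
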